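(* Let $T_1,T_2\subseteq\mathbb{R}^n$ be action sets. Then $T_1\subseteq T_2$ if and only if $\mathbf{W}(T_1)\supseteq\mathbf{W}(T_2)$, where $\mathbf{W}(T)=\bigcap_{t\in T}\mathbf{W}(t)$.
   Context: Single-commodity network pricing setting: $G=(\mathcal{V},\mathcal{A})$ directed graph, arc costs $c\ge0$, nonempty tolled arc set $\mathcal{A}_1\subsetneq\mathcal{A}$, $n=|\mathcal{A}_1|$, $N$ node–arc incidence matrix, single origin $o$ and destination $d$ connected by a toll-free path, $b_o=1$, $b_d=-1$, $b_i=0$ otherwise, $\mathcal{X}=\{x\in\mathbb{R}^{\mathcal{A}}: Nx=b,\ x\ge0\}$, $x_{\mathcal{A}_1}$ the restriction of $x$ to $\mathcal{A}_1$. Let $f(t)=\min\{c^\top x+t^\top x_{\mathcal{A}_1}: x\in\mathcal{X}\}$ for $t\in\mathbb{R}^n$, $t\ge0$, and $f(t)=-\infty$ otherwise. An action set is a set $T=\{t:(t,z)\in F\text{ for some }z\}$ where $F$ is a face of $\operatorname{epi}(-f)$ whose affine hull's direction space does not contain $(0,1)$. For $t\ge0$, $\mathbf{W}(t)$ is the set of $w$ such that $(w,x)$ is optimal for some $x$ in $\min_{w,x}\{c^\top x+t^\top w: x_{\mathcal{A}_1}\le w,\ Nx=b,\ w\ge0,\ x\ge0\}$. *)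

(* Defs.v *)
From HB Require Import structures.
From mathcomp Require Import all_boot all_order all_algebra.
From mathcomp Require Import boolp classical_sets reals constructive_ereal ereal.
Set Implicit Arguments. Unset Strict Implicit. Unset Printing Implicit Defensive.
Import Order.TTheory GRing.Theory Num.Theory.
Local Open Scope classical_set_scope.
Local Open Scope ring_scope.

(* Arcs are A1 + A0 : tolled arcs (inl) and toll-free arcs (inr).
   Vectors of R^n, n = |A1|, are functions A1 -> R. *)
Section NetworkPricing.
Variables (R : realType) (V A1 A0 : finType).
Notation Arc := (A1 + A0)%type.
Variables (tl hd : Arc -> V) (c : Arc -> R) (o d : V).

Definition inc (v : V) (a : Arc) : R := (tl a == v)%:R - (hd a == v)%:R.
Definition bvec (v : V) : R := (v == o)%:R - (v == d)%:R.

Definition flowX (x : Arc -> R) : Prop :=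
  (forall v, \sum_(a : Arc) inc v a * x a = bvec v) /\ (forall a, 0 <= x a).

Definition cost_t (t : A1 -> R) (x : Arc -> R) : R :=
  \sum_(a : Arc) c a * x a + \sum_(i : A1) t i * x (inl i).

Definition fval (t : A1 -> R) : \bar R :=
  if `[< forall i, 0 <= t i >]
  then ereal_inf [set (cost_t t x)%:E | x in flowX]
  else -oo%E.

Definition epi_negf : set ((A1 -> R) * R) :=
  [set p | (- fval p.1 <= p.2%:E)%E].

Definition comb (lam : R) (p q : (A1 -> R) * R) : (A1 -> R) * R :=
  (fun i => lam * p.1 i + (1 - lam) * q.1 i, lam * p.2 + (1 - lam) * q.2).

Definition convex_set (F : set ((A1 -> R) * R)) : Prop :=
  forall p q lam, F p -> F q -> 0 <= lam <= 1 -> F (comb lam p q).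

Definition is_face (C F : set ((A1 -> R) * R)) : Prop :=
  [/\ F `<=` C, convex_set F &
      forall p q lam, C p -> C q -> 0 < lam < 1 -> F (comb lam p q) ->
        F p /\ F q].

(* (0,1) belongs to the direction space of aff(F), i.e. to the linear span
   of the differences p - q with p, q in F *)
Definition vertical_in_dir (F : set ((A1 -> R) * R)) : Prop :=
  exists (k : nat) (lam : 'I_k -> R) (p q : 'I_k -> (A1 -> R) * R),
    [/\ forall j, F (p j) /\ F (q j),
        forall i, \sum_(j < k) lam j * ((p j).1 i - (q j).1 i) = 0 &
        \sum_(j < k) lam j * ((p j).2 - (q j).2) = 1].

Definition action_set (T : set (A1 -> R)) : Prop :=
  exists F, [/\ is_face epi_negf F, ~ vertical_in_dir F &
                T = [set t | exists z, F (t, z)]].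

Definition lp_feas (w : A1 -> R) (x : Arc -> R) : Prop :=
  [/\ forall i, x (inl i) <= w i, flowX x & forall i, 0 <= w i].

Definition lp_obj (t w : A1 -> R) (x : Arc -> R) : R :=
  \sum_(a : Arc) c a * x a + \sum_(i : A1) t i * w i.

Definition Wt (t : A1 -> R) : set (A1 -> R) :=
  [set w | exists x, lp_feas w x /\
     forall w' x', lp_feas w' x' -> lp_obj t w x <= lp_obj t w' x'].

(* W(T) = intersection of W(t), t in T (the whole R^n when T is empty) *)
Definition WT (T : set (A1 -> R)) : set (A1 -> R) :=
  [set w | forall t, T t -> Wt t w].

Definition tollfree_rel : rel V :=
  fun u v => [exists a : A0, (tl (inr a) == u) && (hd (inr a) == v)].

End NetworkPricing.

(* Main.v *)
Require Import Defs.
From HB Require Import structures.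
From mathcomp Require Import all_boot all_order all_algebra.
From mathcomp Require Import boolp classical_sets reals constructive_ereal ereal.
From mathcomp Require Import ring lra zify.
Set Implicit Arguments. Unset Strict Implicit. Unset Printing Implicit Defensive.
Import Order.TTheory GRing.Theory Num.Theory.
Local Open Scope classical_set_scope.
Local Open Scope ring_scope.

Section Walks.
Variables (R : realType) (V A1 A0 : finType).
Notation Arc := (A1 + A0)%type.
Variables (tl hd : Arc -> V) (d : V).

Fixpoint is_walk (u : V) (s : seq Arc) : bool :=
  if s is a :: s' then (tl a == u) && is_walk (hd a) s' else u == d.
Definition nodes u (s : seq Arc) := u :: map hd s.
Definition simple u s := is_walk u s && uniq (nodes u s).

Variable wt : Arc -> R.
Hypothesis wt_ge0 : forall a, 0 <= wt a.
Definition Wsum (s : seq Arc) := \sum_(a <- s) wt a.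

Lemma Wt_ge0 s : 0 <= Wsum s.
Proof. by rewrite /Wsum; apply: sumr_ge0 => a _; apply: wt_ge0. Qed.

Lemma cut_walk u s v : is_walk v s -> uniq (nodes v s) -> u \in nodes v s ->
  exists s2, simple u s2 /\ Wsum s2 <= Wsum s.
Proof.
elim: s v => [|b s IH] v /=.
  move=> vd _; rewrite inE => /eqP ->; exists [::]; split; last by [].
  by rewrite /simple /= vd.
move=> /andP[/eqP tb ws] /andP[vn un]; rewrite inE => /orP[/eqP ->|us].
  exists (b :: s); split=> //; by rewrite /simple /= tb eqxx ws vn un.
have [s2 [ss2 Ws2]] := IH (hd b) ws un us.
exists s2; split=> //; rewrite /Wsum big_cons; apply: (le_trans Ws2).
by rewrite lerDr wt_ge0.
Qed.

Lemma shorten_walk u s : is_walk u s -> exists s', simple u s' /\ Wsum s' <= Wsum s.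
Proof.
elim: s u => [|a s IH] u /=.
  by move=> ud; exists [::]; rewrite /simple /= ud.
move=> /andP[/eqP ta ws]; have [s1 [/andP[ws1 us1] W1]] := IH _ ws.
have [un|un] := boolP (u \in nodes (hd a) s1).
  have [s2 [ss2 W2]] := cut_walk ws1 us1 un.
  exists s2; split=> //; rewrite /Wsum big_cons.
  apply: (le_trans W2); apply: (le_trans W1); by rewrite lerDr wt_ge0.
exists (a :: s1); split.
  by rewrite /simple /= ta eqxx ws1 /=; rewrite /nodes /= in un us1 *; rewrite un us1.
by rewrite /Wsum !big_cons lerD2l.
Qed.

Lemma simple_size u s : simple u s -> (size s < #|V|)%N.
Proof.
move=> /andP[_ /card_uniqP H]; have := max_card (mem (nodes u s)).
by rewrite H /= size_map.
Qed.

End Walks.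

Section Net.
Variables (R : realType) (V A1 A0 : finType).
Notation Arc := (A1 + A0)%type.
Variables (tl hd : Arc -> V) (c : Arc -> R) (o d : V).
Hypothesis c_ge0 : forall a, 0 <= c a.
Variable a0 : Arc.

Definition wt (t : A1 -> R) (a : Arc) : R :=
  c a + (match a with inl i => t i | inr _ => 0 end).
Definition W t s := Wsum (wt t) s.
Definition chi (s : seq Arc) : Arc -> R := fun a => (count_mem a s)%:R.
Definition NN := #|V|.
Definition PT := ('I_NN.+1 * NN.-tuple Arc)%type.
Definition wof (p : PT) : seq Arc := take p.1 p.2.
Definition pot (w : Arc -> R) (M : R) (v : V) :=
  \big[Order.min/M]_(p : PT | simple tl hd d v (wof p)) Wsum w (wof p).

Lemma sum_delta (b : Arc) (F : Arc -> R) : \sum_a (b == a)%:R * F a = F b.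
Proof.
rewrite (bigD1 b) //= eqxx mul1r big1 ?addr0 // => a /negPf.
by rewrite eq_sym => ->; rewrite mul0r.
Qed.

Lemma walk_flow u s : is_walk tl hd d u s ->
  forall v, \sum_a inc R tl hd v a * chi s a = (v == u)%:R - (v == d)%:R.
Proof.
elim: s u => [|b s IH] u /=.
  move=> /eqP -> v; rewrite /chi big1 ?subrr // => a _; by rewrite /= mulr0.
move=> /andP[/eqP tb ws] v.
have -> : chi (b :: s) = fun a => (b == a)%:R + chi s a.
  by apply: funext => a; rewrite /chi /= natrD.
under eq_bigr => a _ do rewrite mulrDr.
rewrite big_split /= (IH (hd b) ws).
under eq_bigr => a _ do rewrite mulrC.
rewrite sum_delta /inc tb (eq_sym u v) (eq_sym (hd b) v).
by rewrite addrA subrK.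
Qed.

Lemma chi_flow s : simple tl hd d o s -> flowX tl hd o d (chi s).
Proof.
move=> /andP[ws _]; split; last by move=> a; rewrite /chi ler0n.
by move=> v; rewrite (walk_flow ws) /bvec.
Qed.

Lemma cost_wt t x : cost_t c t x = \sum_a wt t a * x a.
Proof.
rewrite /cost_t /wt.
under [X in _ = X]eq_bigr => a _ do rewrite mulrDl.
rewrite big_split /=; congr (_ + _).
rewrite big_sumType /=.
by rewrite [X in _ = _ + X]big1 ?addr0 // => j _; rewrite mul0r.
Qed.

Lemma cost_chi t s : cost_t c t (chi s) = W t s.
Proof.
rewrite cost_wt /W /Wsum; elim: s => [|b s IH].
  by rewrite big_nil big1 // => a _; rewrite /chi /= mulr0.
rewrite big_cons -IH /chi /=.
under eq_bigr => a _ do rewrite natrD mulrDr.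
by rewrite big_split /= (eq_bigr (fun a => (b == a)%:R * wt t a)) ?sum_delta // => a _; rewrite mulrC.
Qed.

Lemma wof_surj v s : simple tl hd d v s -> exists p : PT, wof p = s.
Proof.
move=> /simple_size hs.
have hsz : size (take NN (s ++ nseq NN a0)) == NN.
  by apply/eqP; rewrite size_takel // size_cat size_nseq leq_addl.
exists (inord (size s), Tuple hsz); rewrite /wof /= inordK; last by rewrite ltnS ltnW.
by rewrite take_takel ?(ltnW hs) // take_size_cat.
Qed.

Lemma minle (x y : R) : Order.min x y <= x.
Proof. by rewrite ge_min lexx. Qed.
Lemma minle2 (x y z : R) : x <= z -> y <= z -> Order.min x y <= z.
Proof. by move=> h _; rewrite ge_min h. Qed.

Lemma minle3 (x y z : R) : y <= z -> Order.min x y <= z.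
Proof. by move=> h; rewrite ge_min h orbT. Qed.

Lemma pot_le w M v s : simple tl hd d v s -> pot w M v <= Wsum w s.
Proof.
move=> ss; have [p ps] := wof_surj ss; rewrite -ps in ss *.
rewrite /pot (bigD1 p) //=; exact: minle.
Qed.

Lemma pot_leM w M v : pot w M v <= M.
Proof.
rewrite /pot; elim/big_rec: _ => // i x _ hx; exact: minle3.
Qed.

Lemma pot_cases w M v : pot w M v = M \/
  exists p, simple tl hd d v (wof p) /\ pot w M v = Wsum w (wof p).
Proof.
rewrite /pot; elim/big_ind: _ => //=; last by move=> p sp; right; exists p.
  by left.
move=> x y hx hy; rewrite /Order.min; case: ifP => _; [exact: hx| exact: hy].
Qed.

Section Pot.
Variables (w : Arc -> R) (M : R).
Hypothesis w_ge0 : forall a, 0 <= w a.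

Lemma pot_tri a : pot w M (tl a) <= w a + pot w M (hd a).
Proof.
case: (pot_cases w M (hd a)) => [->|[p [sp ->]]].
  by apply: (le_trans (pot_leM _ _ _)); rewrite lerDr.
have wa : is_walk tl hd d (tl a) (a :: wof p) by rewrite /= eqxx; case/andP: sp.
have [s' [ss' Ws']] := shorten_walk w_ge0 wa.
apply: (le_trans (pot_le _ _ ss')); by rewrite /Wsum big_cons in Ws'.
Qed.

Lemma pot_d : pot w M d <= 0.
Proof.
have : simple tl hd d d [::] by rewrite /simple /= eqxx.
by move/(pot_le w M); rewrite /Wsum big_nil.
Qed.

Lemma pot_lb x : flowX tl hd o d x -> pot w M o - pot w M d <= \sum_a w a * x a.
Proof.
move=> [fl xge0].
have -> : pot w M o - pot w M d = \sum_v pot w M v * bvec R o d v.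
  rewrite /bvec.
  under eq_bigr => v _ do rewrite mulrBr.
  rewrite sumrB; congr (_ - _).
    rewrite (bigD1 o) //= eqxx mulr1 big1 ?addr0 // => v /negPf ->; by rewrite mulr0.
  rewrite (bigD1 d) //= eqxx mulr1 big1 ?addr0 // => v /negPf ->; by rewrite mulr0.
under eq_bigr => v _ do rewrite -fl mulr_sumr.
rewrite exchange_big /=; apply: ler_sum => a _.
under eq_bigr => v _ do rewrite mulrA.
rewrite -mulr_suml ler_wpM2r //.
rewrite /inc.
under eq_bigr => v _ do rewrite mulrBr.
rewrite sumrB (bigD1 (tl a)) //= eqxx mulr1 big1 ?addr0; last first.
  by move=> v /negPf; rewrite eq_sym => ->; rewrite mulr0.
rewrite (bigD1 (hd a)) //= eqxx mulr1 big1 ?addr0; last first.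
  by move=> v /negPf; rewrite eq_sym => ->; rewrite mulr0.
by rewrite lerBlDr addrC [X in _ <= X]addrC; apply: pot_tri.
Qed.

End Pot.
End Net.

Section Net2.
Variables (R : realType) (V A1 A0 : finType).
Notation Arc := (A1 + A0)%type.
Variables (tl hd : Arc -> V) (c : Arc -> R) (o d : V).
Hypothesis c_ge0 : forall a, 0 <= c a.
Variable a0 : Arc.
Variable so : seq Arc.
Hypothesis so_simple : simple tl hd d o so.

Notation W := (W c).
Notation simpleo := (simple tl hd d o).
Definition fr t := pot tl hd d (wt c t) (W t so) o.

Lemma wt_ge0 t : (forall i, 0 <= t i) -> forall a, 0 <= wt c t a.
Proof. by move=> t0 [i|j]; rewrite /wt ?addr0 ?addr_ge0. Qed.

Lemma fr_le t s : simpleo s -> fr t <= W t s.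
Proof. exact: pot_le. Qed.

Lemma fr_att t : exists s, simpleo s /\ fr t = W t s.
Proof.
rewrite /fr; case: (pot_cases tl hd d (wt c t) (W t so) o) => [->|[p [sp ->]]].
  by exists so.
by exists (wof p).
Qed.

Lemma fr_lb t x : (forall i, 0 <= t i) -> flowX tl hd o d x -> fr t <= cost_t c t x.
Proof.
move=> t0 fx; rewrite cost_wt.
have := pot_lb a0 (W t so) (wt_ge0 t0) fx.
have := pot_d tl hd d a0 (wt c t) (W t so).
rewrite /fr; lra.
Qed.

Lemma fval_eq t : (forall i, 0 <= t i) -> fval tl hd c o d t = (fr t)%:E.
Proof.
move=> t0; rewrite /fval asboolT //.
apply/le_anti/andP; split.
  apply: ge_ereal_inf; have [s [ss ->]] := fr_att t.
  exists (W t s)%:E => //; exists (chi R s); first exact: (chi_flow R ss).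
  by rewrite cost_chi.
apply: le_ereal_inf_tmp => _ [x fx <-]; rewrite lee_fin; exact: fr_lb.
Qed.

Lemma lp_lb t w x : (forall i, 0 <= t i) -> lp_feas tl hd o d w x -> fr t <= lp_obj c t w x.
Proof.
move=> t0 [xw fx w0]; apply: (le_trans (fr_lb t0 fx)).
rewrite /cost_t /lp_obj lerD2l; apply: ler_sum => i _.
by rewrite ler_wpM2l.
Qed.

Lemma lp_obj_chi t s : lp_obj c t (fun i => chi R s (inl i)) (chi R s) = W t s.
Proof. by rewrite -cost_chi. Qed.

Lemma W_comb t t' lam s :
  W (fun i => lam * t i + (1 - lam) * t' i) s = lam * W t s + (1 - lam) * W t' s.
Proof.
rewrite /W /Wsum; elim: s => [|a s IH]; first by rewrite !big_nil; ring.
rewrite !big_cons IH /wt; case: a => [i|j]; ring.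
Qed.

Lemma epi_ge0 p : epi_negf tl hd c o d p -> forall i, 0 <= p.1 i.
Proof.
by rewrite /epi_negf /= /fval; case: asboolP => // _.
Qed.

Lemma epi_iff t z : (forall i, 0 <= t i) ->
  (epi_negf tl hd c o d (t, z) <-> - fr t <= z).
Proof.
move=> t0; rewrite /epi_negf /= fval_eq //.
Qed.

End Net2.

Section Net3.
Variables (R : realType) (V A1 A0 : finType).
Notation Arc := (A1 + A0)%type.
Variables (tl hd : Arc -> V) (c : Arc -> R) (o d : V).
Hypothesis c_ge0 : forall a, 0 <= c a.
Variable a0 : Arc.
Variable so : seq Arc.
Hypothesis so_simple : simple tl hd d o so.
Notation fr := (fr tl hd c o d so).
Notation epi := (epi_negf tl hd c o d).
Let epi_iff' := epi_iff c_ge0 a0 so_simple.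

Lemma face_graph F t z : is_face epi F -> ~ vertical_in_dir F ->
  F (t, z) -> (forall i, 0 <= t i) /\ z = - fr t.
Proof.
move=> [Fsub Fconv Fext] nv Ftz.
have t0 := epi_ge0 (Fsub _ Ftz); split => //.
have := Fsub _ Ftz; rewrite epi_iff' // le_eqVlt => /orP[/eqP <-//|lt].
exfalso; apply: nv.
have Pp : epi (t, - fr t) by rewrite epi_iff'.
have Pq : epi (t, 2 * z + fr t) by rewrite epi_iff' //; lra.
have hc : comb (1/2) (t, - fr t) (t, 2 * z + fr t) = (t, z).
  rewrite /comb /=; congr pair; last by field.
  by apply: funext => i; field.
have [Fp Fq] : F (t, - fr t) /\ F (t, 2 * z + fr t).
  apply: (Fext _ _ (1/2) Pp Pq); first by apply/andP; split; lra.
  by rewrite hc.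
exists 1%N, (fun _ => 1 / (2 * z + 2 * fr t)), (fun _ => (t, 2 * z + fr t)),
  (fun _ => (t, - fr t)); split => //.
  by move=> i; rewrite big_ord1 /= subrr mulr0.
rewrite big_ord1 /=.
have hp : 0 < 2 * z + 2 * fr t by lra.
rewrite (_ : 2 * z + fr t - - fr t = 2 * z + 2 * fr t); last by ring.
by rewrite div1r mulVf // gt_eqF.
Qed.

Lemma ex_min_meas (X : Type) (P : X -> Prop) (m : X -> nat) :
  (exists x, P x) -> exists x, P x /\ forall y, P y -> (m x <= m y)%N.
Proof.
move=> [x Px].
suff H : forall n x, P x -> (m x <= n)%N -> exists x, P x /\ forall y, P y -> (m x <= m y)%N.
  exact: (H _ x Px (leqnn _)).
elim=> [|n IH] x' Px' hm.
  exists x'; split => // y _; by rewrite leqn0 in hm; rewrite (eqP hm).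
case: (pselect (forall y, P y -> (m x' <= m y)%N)) => [h|h]; first by exists x'.
have [y Py] : exists y, P y /\ (m y < m x')%N.
  apply: contra_notP h => h y Py; rewrite leqNgt; apply/negP => lt.
  by apply: h; exists y.
case: Py => Py lt; apply: (IH y Py); rewrite -ltnS; exact: leq_trans lt hm.
Qed.

Lemma small_eps (I : finType) (P : I -> R -> Prop) :
  (forall i, exists2 e, 0 < e & forall x, 0 < x <= e -> P i x) ->
  exists2 x, 0 < x & forall i, P i x.
Proof.
move=> H.
suff: forall s : seq I, exists2 x, 0 < x & forall y, 0 < y <= x -> forall i, i \in s -> P i y.
  move=> /(_ (enum I)) [x x0 hx]; exists x => // i.
  by apply: hx; [rewrite x0 lexx | rewrite mem_enum].
elim=> [|i s [x x0 hx]].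
  by exists 1 => // y _ i; rewrite in_nil.
have [e e0 he] := H i.
exists (Order.min x e); first by rewrite lt_min x0 e0.
move=> y /andP[y0 ym] j; rewrite inE => /orP[/eqP ->|js].
  apply: he; rewrite y0 /=; apply: (le_trans ym); by rewrite ge_min lexx orbT.
apply: hx => //; rewrite y0 /=; apply: (le_trans ym); by rewrite ge_min lexx.
Qed.

Variable i0 : A1.
Notation W := (W c).
Notation simpleo := (simple tl hd d o).
Let fr_le' := @fr_le R V A1 A0 tl hd c o d a0 so.
Let fr_att' := fr_att c so_simple.
Let lp_lb' := @lp_lb R V A1 A0 tl hd c o d c_ge0 a0 so.
Let wof_surj' := @wof_surj V A1 A0 tl hd d a0.

Definition Opt t : {set PT V A1 A0} := [set p | simpleo (wof p) && (W t (wof p) == fr t)].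
Definition Zs (t : A1 -> R) : {set A1} := [set i | t i == 0].

Lemma chi_Wt t s : (forall i, 0 <= t i) -> simpleo s -> W t s = fr t ->
  Wt tl hd c o d t (fun i => chi R s (inl i)).
Proof.
move=> t0 ss hW; exists (chi R s); split.
  split; [by move=> i; rewrite lexx | exact: (chi_flow R ss) | by move=> i; rewrite /chi ler0n].
move=> w' x' hf; rewrite lp_obj_chi hW; exact: lp_lb'.
Qed.

Lemma chi_feas s : simpleo s ->
  lp_feas tl hd o d (fun i => chi R s (inl i)) (chi R s).
Proof.
move=> ss; split; [by move=> i; rewrite lexx | exact: (chi_flow R ss) | by move=> i; rewrite /chi ler0n].
Qed.

Lemma main_dir T1 T2 : action_set tl hd c o d T1 -> action_set tl hd c o d T2 ->
  WT tl hd c o d T2 `<=` WT tl hd c o d T1 -> T1 `<=` T2.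
Proof.
move=> [F1 [f1 nv1 ->]] [F2 [f2 nv2 ->]] WTsub t1 [z1 F1t1].
have [t1ge0 _] := face_graph f1 nv1 F1t1.
have WT1 : forall w, WT tl hd c o d [set t | exists z, F2 (t, z)] w -> Wt tl hd c o d t1 w.
  by move=> w /WTsub; apply; exists z1.
case: (pselect (exists t, exists z, F2 (t, z))) => [ne|em]; last first.
  have : WT tl hd c o d [set t | exists z, F2 (t, z)] (fun _ => -1).
    by move=> t [z Ft]; exfalso; apply: em; exists t, z.
  move/WT1 => [x [[_ _ w0] _]]; have := w0 i0; by rewrite ler0N1.
set T2s := [set t | exists z, F2 (t, z)] in WT1 ne *.
have T2ge0 : forall t, T2s t -> forall i, 0 <= t i.
  by move=> t [z Ft]; case: (face_graph f2 nv2 Ft).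
have [t2 [T2t2 t2min]] := ex_min_meas (fun t => #|Opt t| + #|Zs t|)%N ne.
have t2ge0 := T2ge0 _ T2t2.
(* t2 is a relative interior point *)
have sub : forall t, T2s t -> (Opt t2 \subset Opt t) /\ (Zs t2 \subset Zs t).
  move=> t T2t; have tge0 := T2ge0 _ T2t.
  case: T2t2 => [z2 F2t2]; case: T2t => [z Ft].
  have [_ ez2] := face_graph f2 nv2 F2t2; have [_ ez] := face_graph f2 nv2 Ft.
  have := f2; case => Fsub Fconv _.
  have hlam : 0 <= (1/2 : R) <= 1 by apply/andP; split; lra.
  have Fm := Fconv _ _ (1/2) F2t2 Ft hlam.
  rewrite /comb /= in Fm.
  set m := (fun i => 1 / 2 * t2 i + (1 - 1 / 2) * t i) in Fm.
  have [_ efm] := face_graph f2 nv2 Fm.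
  have Tm : T2s m by exists (1 / 2 * z2 + (1 - 1 / 2) * z).
  have Om : Opt m \subset Opt t2 :&: Opt t.
    apply/fintype.subsetP => p; rewrite !inE => /andP[sp /eqP hp].
    rewrite sp /=; move: hp; rewrite /m W_comb => hp.
    have h1 := fr_le' t2 sp; have h2 := fr_le' t sp.
    by apply/andP; split; apply/eqP; lra.
  have Zm : Zs m \subset Zs t2 :&: Zs t.
    apply/fintype.subsetP => i; rewrite !inE /m => /eqP hi.
    have := t2ge0 i; have := tge0 i; by move=> h1 h2; apply/andP; split; apply/eqP; lra.
  have hmin := t2min _ Tm.
  have c1 : (#|Opt m| <= #|Opt t2|)%N.
    by apply: subset_leq_card; apply: (fintype.subset_trans Om); apply: subsetIl.
  have c2 : (#|Zs m| <= #|Zs t2|)%N.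
    by apply: subset_leq_card; apply: (fintype.subset_trans Zm); apply: subsetIl.
  have e1 : Opt m = Opt t2.
    apply/eqP; rewrite eqEcard; apply/andP; split; last by lia.
    apply: (fintype.subset_trans Om); exact: subsetIl.
  have e2 : Zs m = Zs t2.
    apply/eqP; rewrite eqEcard; apply/andP; split; last by lia.
    apply: (fintype.subset_trans Zm); exact: subsetIl.
  by rewrite -e1 -e2; split; [apply: (fintype.subset_trans Om) | apply: (fintype.subset_trans Zm)];
    exact: subsetIr.
have P0 : exists P, P \in Opt t2.
  have [s [ss hs]] := fr_att' t2; have [p ps] := wof_surj' ss.
  by exists p; rewrite inE ps ss /= hs eqxx.
have inOpt : forall t p, T2s t -> p \in Opt t2 -> W t (wof p) = fr t.
  move=> t p T2t pin; have [/fintype.subsetP sO _] := sub t T2t.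
  by move: (sO p pin); rewrite inE => /andP[_ /eqP].
have optt1 : forall p, p \in Opt t2 -> W t1 (wof p) = fr t1.
  move=> p pin; have := pin; rewrite inE => /andP[sp /eqP hp].
  have Wall : WT tl hd c o d T2s (fun i => chi R (wof p) (inl i)).
    move=> t T2t; exact: chi_Wt (T2ge0 _ T2t) sp (inOpt _ _ T2t pin).
  have [x [fx xopt]] := WT1 _ Wall.
  have h2 := lp_lb' t2ge0 fx.
  have [sQ [sQs hQ]] := fr_att' t1.
  have hQ' := xopt _ _ (chi_feas sQs).
  rewrite lp_obj_chi -hQ in hQ'.
  have h1 := fr_le' t1 sp.
  have e1 := lp_obj_chi c t1 (wof p); have e2 := lp_obj_chi c t2 (wof p).
  move: h2 hQ' e1 e2 hp h1; rewrite /lp_obj; lra.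
have zsupp : forall i, t2 i = 0 -> t1 i = 0.
  move=> i hi; case: P0 => P0 inP0; have := inP0; rewrite inE => /andP[sp0 /eqP hp0].
  set s := wof P0 in sp0 hp0.
  have key : forall K, 0 <= K -> t1 i * K <= W t1 s.
    move=> K K0; set wK := fun j => chi R s (inl j) + (if j == i then K else 0).
    have Wall : WT tl hd c o d T2s wK.
      move=> t T2t; have [_ /fintype.subsetP zs] := sub t T2t.
      have ht := inOpt _ _ T2t inP0.
      have ti : t i = 0.
        by have := zs i; rewrite !inE hi eqxx => /(_ isT) /eqP.
      exists (chi R s); split.
        have [h1 h2 h3] := chi_feas sp0.
        split => // j; rewrite /wK; have := h1 j; have := h3 j; case: ifP => _; lra.
      move=> w' x' hf.
      have -> : lp_obj c t wK (chi R s) =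
                lp_obj c t (fun j => chi R s (inl j)) (chi R s) + t i * K.
        rewrite /lp_obj /wK -addrA; congr (_ + _).
        under eq_bigr do rewrite mulrDr.
        rewrite big_split /=; congr (_ + _).
        rewrite (bigD1 i) //= eqxx big1 ?addr0 // => j /negPf ->; by rewrite mulr0.
      rewrite ti mul0r addr0 lp_obj_chi ht; exact: (lp_lb' (T2ge0 _ T2t) hf).
    have [x [[_ [_ x0] _] xopt]] := WT1 _ Wall.
    have := xopt _ _ (chi_feas sp0); rewrite lp_obj_chi /lp_obj.
    have cx : 0 <= \sum_a c a * x a by apply: sumr_ge0 => a _; rewrite mulr_ge0.
    have : t1 i * K <= \sum_j t1 j * wK j.
      rewrite (bigD1 i) //= -[X in X <= _]addr0; apply: lerD.
        rewrite ler_wpM2l // /wK eqxx lerDr /chi ler0n //.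
      apply: sumr_ge0 => j _; rewrite mulr_ge0 // /wK addr_ge0 ?/chi ?ler0n //.
      by case: ifP.
    lra.
  apply/eqP; rewrite eq_le t1ge0 andbT; rewrite leNgt; apply/negP => pos.
  have K0 : 0 <= (`|W t1 s| + 1) / t1 i by rewrite divr_ge0 // ?addr_ge0 // ltW.
  have := key _ K0.
  have -> : t1 i * ((`|W t1 s| + 1) / t1 i) = `|W t1 s| + 1.
    by field; rewrite gt_eqF.
  have := ler_norm (W t1 s); lra.
pose t3 (e : R) := fun i => (1 + e) * t2 i + (1 - (1 + e)) * t1 i.
pose L (e : R) := (1 + e) * fr t2 + (1 - (1 + e)) * fr t1.
pose Pk := fun (k : (A1 + PT V A1 A0)%type) (e : R) =>
  match k with
  | inl i => is_true (0 <= t3 e i)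
  | inr p => simpleo (wof p) -> L e <= W (t3 e) (wof p)
  end.
have hcond : forall k, exists2 e : R, 0 < e & forall x, 0 < x <= e -> Pk k x.
  case=> [i|p].
    case: (eqVneq (t2 i) 0) => [h0|hn].
      exists 1 => // x _; rewrite /Pk /t3 h0 (zsupp i h0) !mulr0 addr0 //.
    have pos : 0 < t2 i by rewrite lt_def hn t2ge0.
    have h1 : 0 < t1 i + 1 by have := t1ge0 i; lra.
    exists (t2 i / (t1 i + 1)); first by rewrite divr_gt0.
    move=> x /andP[x0 xe]; rewrite /Pk /t3.
    have : x * (t1 i + 1) <= t2 i / (t1 i + 1) * (t1 i + 1) by rewrite ler_wpM2r // ltW.
    rewrite divfK ?gt_eqF // mulrDr mulr1 => hx.
    have : 0 <= x * t2 i by rewrite mulr_ge0 // ltW.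
    have -> : 1 - (1 + x) = - x by ring.
    rewrite mulrDl mul1r mulNr; lra.
  case: (boolP (simpleo (wof p))) => sp; last first.
    by exists 1 => // x _ h; rewrite h in sp.
  have hW2 := fr_le' t2 sp; have hW1 := fr_le' t1 sp.
  case: (eqVneq (W t2 (wof p)) (fr t2)) => [heq|hne].
    have pin : p \in Opt t2 by rewrite inE sp heq eqxx.
    exists 1 => // x _ _; rewrite /L /t3 W_comb heq (optt1 _ pin) lexx //.
  have gpos : 0 < W t2 (wof p) - fr t2 by rewrite subr_gt0 lt_def hne hW2.
  have Dpos : 0 < W t1 (wof p) - fr t1 + 1 by lra.
  exists ((W t2 (wof p) - fr t2) / (W t1 (wof p) - fr t1 + 1)); first by rewrite divr_gt0.
  move=> x /andP[x0 xe] _; rewrite /L /t3 W_comb.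
  have : x * (W t1 (wof p) - fr t1 + 1) <=
    (W t2 (wof p) - fr t2) / (W t1 (wof p) - fr t1 + 1) * (W t1 (wof p) - fr t1 + 1).
    by rewrite ler_wpM2r // ltW.
  rewrite divfK ?gt_eqF // => hx.
  have : 0 <= x * (W t2 (wof p) - fr t2) by rewrite mulr_ge0 // ltW.
  move: hx; rewrite ?mulrDr ?mulrBr ?mulr1 ?mulrDl ?mulrBl ?mul1r.
  lra.
have [eps eps0 heps] := small_eps hcond.
have t3ge0 : forall i, 0 <= t3 eps i := fun i => heps (inl i).
have frt3 : L eps <= fr (t3 eps).
  have [s [ss hs]] := fr_att' (t3 eps); have [p ps] := wof_surj' ss.
  rewrite hs -ps; apply: (heps (inr p)); by rewrite ps.
have [z2 F2t2] := T2t2; have [_ ez2] := face_graph f2 nv2 F2t2.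
rewrite ez2 in F2t2.
have := f2; case=> Fsub _ Fext.
have he : 1 + eps != 0 by apply: lt0r_neq0; lra.
pose lam := eps / (1 + eps).
have hlam : 0 < lam < 1.
  rewrite /lam; apply/andP; split; first by rewrite divr_gt0 //; lra.
  by rewrite ltr_pdivrMr; lra.
have Pp : epi (t1, - fr t1) by rewrite epi_iff'.
have Pq : epi (t3 eps, - L eps) by rewrite epi_iff' //; lra.
have hc : comb lam (t1, - fr t1) (t3 eps, - L eps) = (t2, - fr t2).
  rewrite /comb /=; congr pair; [apply: funext => i|]; rewrite /lam /t3 /L; field => //.
have HF : F2 (comb lam (t1, - fr t1) (t3 eps, - L eps)) by rewrite hc.
have [Fp _] := Fext _ _ lam Pp Pq hlam HF.
by exists (- fr t1).
Qed.
End Net3.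

Lemma walk_of_path (V A1 A0 : finType) (tl hd : (A1 + A0)%type -> V) (d : V) :
  forall (p : seq V) x, path (tollfree_rel tl hd) x p -> last x p = d ->
  exists s, is_walk tl hd d x s.
Proof.
elim=> [|y p IH] x /=.
  by move=> _ ->; exists [::]; rewrite /= eqxx.
move=> /andP[/existsP [a /andP[/eqP ta /eqP ha]] pth] lst.
have [s ws] := IH y pth lst.
by exists (inr a :: s); rewrite /= ta eqxx ha ws.
Qed.

Theorem corollary1 (R : realType) (V A1 A0 : finType)
  (tl hd : (A1 + A0)%type -> V) (c : (A1 + A0)%type -> R) (o d : V) :
  (forall a, 0 <= c a) ->
  (0 < #|A1|)%N -> (0 < #|A0|)%N ->
  o != d ->
  connect (tollfree_rel tl hd) o d ->
  forall T1 T2 : set (A1 -> R),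
    action_set tl hd c o d T1 -> action_set tl hd c o d T2 ->
    (T1 `<=` T2 <-> WT tl hd c o d T2 `<=` WT tl hd c o d T1).
Proof.
move=> c0 hA1 _ _ conn T1 T2 a1 a2; split.
  by move=> sub w hw t T1t; apply: hw; apply: sub.
case/card_gt0P: hA1 => i0 _.
case/connectP: conn => p pth lst.
have [s ws] := walk_of_path pth (esym lst).
have w0 : forall a : (A1 + A0)%type, 0 <= (fun _ => 0 : R) a by move=> a; rewrite lexx.
have [so [sos _]] := shorten_walk w0 ws.
exact: (main_dir c0 (inl i0) sos i0 a1 a2).
Qed.
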